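(* For each prime number $p>2$, there exists a self-similar $p$-adic fractal string $\mathcal{CS}_p\subseteq\mathbb{Z}_p$ of Minkowski--Bouligand dimension $D=\frac{\log(\frac{1+p}{2})}{\log p}$ and with oscillatory period $\mathbf{p}=\frac{2\pi}{\log p}$; that is, its geometric zeta function extends meromorphically to $\mathbb{C}$, its set of poles (complex dimensions) is exactly $\{D+\frac{2\pi i n}{\log p}: n\in\mathbb{Z}\}$, and $D$ is the abscissa of convergence of the series defining the geometric zeta function.
   Context: Let $p$ be a prime and $\mathbb{Z}_p$ the ring of $p$-adic integers with $|p|_p=p^{-1}$. A $p$-adic fractal string $\mathcal{L}$ in $\mathbb{Z}_p$ is a countable disjoint union of balls $a+p^n\mathbb{Z}_p$ ($a\in\mathbb{Z}_p$, $n\ge1$) contained in $\mathbb{Z}_p$; such a ball has length $p^{-n}$, and $\mathcal{L}$ is encoded by its sequence of lengths $l_j$ counted with multiplicity. Its geometric zeta function is $\zeta_{\mathcal{L}}(s)=\sum_j l_j^s$ for $\Re(s)$ large, meromorphically continued to $\mathbb{C}$ when possible; the complex dimensions are the poles of this continuation; the Minkowski--Bouligand dimension $D$ is the abscissa of convergence of $\sum_j l_j^s$; the oscillatory period is $\mathbf{p}>0$ if the set of complex dimensions is exactly $\{D+in\mathbf{p}:n\in\mathbb{Z}\}$. $\mathcal{L}$ is self-similar if it is the complement in $\mathbb{Z}_p$ of the unique nonempty compact set $K\subseteq\mathbb{Z}_p$ satisfying $K=\bigcup_i\phi_i(K)$ for a finite family of at least two similarity contractions $\phi_i(x)=c_i+p^{m}x$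 of $\mathbb{Z}_p$ into itself ($c_i\in\mathbb{Z}$, $m\ge1$). *)

(* Defs.v *)
From Stdlib Require Import Reals ZArith List Znumtheory Classical ClassicalDescription.
From Coquelicot Require Import Coquelicot.
Open Scope R_scope.

(* An element of Z_p is represented by its coherent sequence of residues:
   x n is the residue of x modulo p^n, in [0, p^n), with x (n+1) = x n mod p^n. *)
Definition padic (p : nat) (x : nat -> Z) : Prop :=
  forall n : nat,
    (0 <= x n < Z.of_nat p ^ Z.of_nat n)%Z /\
    (x (S n) mod (Z.of_nat p ^ Z.of_nat n) = x n)%Z.

(* Subsets of Z_p: predicates on residue sequences (only valid ones matter). *)
Definition pset := (nat -> Z) -> Prop.

(* The ball r + p^n Z_p  (r a residue mod p^n); it has length p^{-n}. *)
Definition ball (p : nat) (r : Z) (n : nat) : pset :=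
  fun x => padic p x /\ x n = r.

Definition psubset (p : nat) (A B : pset) : Prop :=
  forall x, padic p x -> A x -> B x.

Definition pset_eq (p : nat) (A B : pset) : Prop :=
  forall x, padic p x -> (A x <-> B x).

Definition popen (p : nat) (U : pset) : Prop :=
  forall x, padic p x -> U x -> exists n : nat, psubset p (ball p (x n) n) U.

Definition pcompact (p : nat) (K : pset) : Prop :=
  forall (I : Type) (U : I -> pset),
    (forall i, popen p (U i)) ->
    (forall x, padic p x -> K x -> exists i, U i x) ->
    exists l : list I, forall x, padic p x -> K x -> exists i, In i l /\ U i x.

Definition phi (p : nat) (m : nat) (c : Z) (x : nat -> Z) : nat -> Z :=
  fun n => ((c + Z.of_nat p ^ Z.of_nat m * x n) mod (Z.of_nat p ^ Z.of_nat n))%Z.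

Definition self_similar_eq (p m : nat) (cs : list Z) (K : pset) : Prop :=
  pset_eq p K (fun y => exists c, In c cs /\
                 exists x, padic p x /\ K x /\ forall n, y n = phi p m c x n).

Definition attractor (p m : nat) (cs : list Z) (K : pset) : Prop :=
  (exists x, padic p x /\ K x) /\ pcompact p K /\ self_similar_eq p m cs K.

(** The fractal string: complement of K in Z_p, decomposed into its maximal balls. *)
Definition in_compl (K : pset) : pset := fun x => ~ K x.

Definition maximal_ball (p : nat) (K : pset) (r : Z) (n : nat) : Prop :=
  (1 <= n)%nat /\ (0 <= r < Z.of_nat p ^ Z.of_nat n)%Z /\
  psubset p (ball p r n) (in_compl K) /\
  ~ psubset p (ball p (r mod (Z.of_nat p ^ Z.of_nat (n - 1)))%Z (n - 1))
             (in_compl K).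

Definition ind (P : Prop) : R :=
  if excluded_middle_informative P then 1 else 0.

(* multiplicity of the length p^{-n} in the fractal string *)
Definition mult (p : nat) (K : pset) (n : nat) : R :=
  fold_right Rplus 0
    (map (fun r => ind (maximal_ball p K (Z.of_nat r) n)) (seq 0 (p ^ n))).

Definition cpow (l : R) (s : C) : C :=
  (exp (Re s * ln l) * cos (Im s * ln l), exp (Re s * ln l) * sin (Im s * ln l)).

(* The n-th grouped term of the geometric zeta function:
   (number of lengths equal to p^{-n}) * (p^{-n})^s. *)
Definition zeta_term (p : nat) (K : pset) (s : C) (n : nat) : C :=
  Cmult (RtoC (mult p K n)) (cpow (/ INR p ^ n) s).

(* Minkowski--Bouligand dimension: abscissa of convergence of sum_j l_j^sigma. *)
Definition conv_at (p : nat) (K : pset) (sigma : R) : Prop :=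
  ex_series (fun n => mult p K n * Rpower (/ INR p ^ n) sigma).

Definition is_abscissa (p : nat) (K : pset) (D : R) : Prop :=
  (forall sigma, conv_at p K sigma -> D <= sigma) /\
  (forall b, (forall sigma, conv_at p K sigma -> b <= sigma) -> b <= D).

Definition meromorphic_cont_with_poles (p : nat) (K : pset) (f : C -> C)
  (P : C -> Prop) : Prop :=
  (exists sigma0 : R, forall s : C, sigma0 < Re s ->
     is_series (zeta_term p K s) (f s)) /\
  (forall z : C, ~ P z -> exists l : C, is_derive f z l) /\
  (forall z : C, P z ->
     filterlim (fun w => Cmod (f w)) (locally' z) (Rbar_locally p_infty)).

(* Main.v *)
Require Import Defs.
From Stdlib Require Import Reals ZArith List Znumtheory Lia Lra Classical ClassicalDescription IndefiniteDescription FunctionalExtensionality.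
From Coquelicot Require Import Coquelicot.
Open Scope R_scope.

Local Notation pw p n := (Z.of_nat p ^ Z.of_nat n)%Z.

Lemma pw_pos p n : (0 < p)%nat -> (0 < pw p n)%Z.
Proof. intros; apply Z.pow_pos_nonneg; lia. Qed.

Lemma pw_S p n : pw p (S n) = (Z.of_nat p * pw p n)%Z.
Proof. rewrite Nat2Z.inj_succ, Z.pow_succ_r; lia. Qed.

Lemma pw_add p a b : pw p (a + b) = (pw p a * pw p b)%Z.
Proof. rewrite Nat2Z.inj_add, Z.pow_add_r; lia. Qed.

Lemma pw_le p a b : (0 < p)%nat -> (a <= b)%nat -> (pw p a <= pw p b)%Z.
Proof.
  intros Hp H. replace b with (a + (b - a))%nat by lia. rewrite pw_add.
  pose proof (pw_pos p a Hp). pose proof (pw_pos p (b - a) Hp). nia.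
Qed.

Lemma pw_div p a b : (a <= b)%nat -> (pw p a | pw p b)%Z.
Proof.
  intros H. replace b with (a + (b - a))%nat by lia. rewrite pw_add.
  exists (pw p (b - a)); ring.
Qed.

Lemma padic_coh p x n m : (0 < p)%nat -> padic p x -> (n <= m)%nat ->
  (x m mod pw p n)%Z = x n.
Proof.
  intros Hp Hx H. induction H.
  - apply Z.mod_small. apply Hx.
  - rewrite <- IHle. rewrite <- (proj2 (Hx m)).
    rewrite Z.mod_mod_divide; auto. apply pw_div; lia.
Qed.

Definition dig p (r : Z) (j : nat) : Z := ((r / pw p j) mod Z.of_nat p)%Z.
Definition evenD p (r : Z) (n : nat) : Prop :=
  forall j, (j < n)%nat -> Z.even (dig p r j) = true.

Lemma dig_mod p r n j : (0 < p)%nat -> (j < n)%nat ->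
  dig p (r mod pw p n) j = dig p r j.
Proof.
  intros Hp Hj. unfold dig.
  assert (HB := pw_pos p j Hp). assert (HN := pw_pos p n Hp).
  assert (E : pw p n = (pw p j * (Z.of_nat p * pw p (n - S j)))%Z).
  { rewrite <- pw_S, <- pw_add. f_equal. lia. }
  rewrite (Z.div_mod r (pw p n)) at 2 by lia.
  rewrite E.
  replace (pw p j * (Z.of_nat p * pw p (n - S j)) * (r / (pw p j * (Z.of_nat p * pw p (n - S j)))) +
     r mod (pw p j * (Z.of_nat p * pw p (n - S j))))%Z with
    (r mod (pw p j * (Z.of_nat p * pw p (n - S j))) +
     (pw p (n - S j) * (r / (pw p j * (Z.of_nat p * pw p (n - S j)))) * Z.of_nat p) * pw p j)%Z by ring.
  rewrite Z.div_add by lia. rewrite Z.mod_add by lia. reflexivity.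
Qed.

Lemma dig_phi0 p c X : (0 < p)%nat -> (0 <= c < Z.of_nat p)%Z ->
  dig p (c + Z.of_nat p * X) 0 = c.
Proof.
  intros Hp Hc. unfold dig. simpl Z.of_nat. rewrite Z.pow_0_r, Z.div_1_r.
  rewrite Z.mul_comm, Z.mod_add by lia. apply Z.mod_small; lia.
Qed.

Lemma div_P_pw p Y j : (0 < p)%nat -> (Y / Z.of_nat p / pw p j)%Z = (Y / pw p (S j))%Z.
Proof.
  intros Hp. rewrite Z.div_div by (try lia; apply pw_pos; lia). now rewrite pw_S.
Qed.

Lemma dig_shift p Y j : (0 < p)%nat -> dig p (Y / Z.of_nat p) j = dig p Y (S j).
Proof. intros Hp. unfold dig. now rewrite div_P_pw. Qed.

Lemma dig_phiS p c X j : (0 < p)%nat -> (0 <= c < Z.of_nat p)%Z ->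
  dig p (c + Z.of_nat p * X) (S j) = dig p X j.
Proof.
  intros Hp Hc. rewrite <- dig_shift by auto. f_equal.
  rewrite Z.mul_comm, Z.div_add by lia. rewrite Z.div_small by lia. lia.
Qed.

Lemma ev_phi p c X m n : (0 < p)%nat -> (0 <= c < Z.of_nat p)%Z -> Z.even c = true ->
  evenD p X m -> (n <= S m)%nat ->
  evenD p ((c + Z.of_nat p * X) mod pw p n) n.
Proof.
  intros Hp Hc He HX Hn j Hj. rewrite dig_mod by auto.
  destruct j as [|j].
  - now rewrite dig_phi0.
  - rewrite dig_phiS by auto. apply HX. lia.
Qed.

Lemma ev_up p x n m : (0 < p)%nat -> padic p x -> evenD p (x n) n -> (n <= m)%nat ->
  evenD p (x m) n.
Proof.
  intros Hp Hx He Hnm j Hj. rewrite <- (dig_mod p (x m) n j) by auto.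
  rewrite padic_coh by auto. now apply He.
Qed.

Lemma ev_mod p r n : (0 < p)%nat -> (evenD p r n <-> evenD p (r mod pw p n) n).
Proof.
  intros Hp; split; intros H j Hj; specialize (H j Hj); rewrite ?dig_mod in * by auto; auto.
Qed.

Definition extz p (r : Z) : nat -> Z := fun m => (r mod pw p m)%Z.

Lemma extz_padic p r : (0 < p)%nat -> padic p (extz p r).
Proof.
  intros Hp n. unfold extz. split.
  - apply Z.mod_pos_bound, pw_pos; auto.
  - apply Z.mod_mod_divide, pw_div; lia.
Qed.

Lemma extz_ev p r n : (0 < p)%nat -> (0 <= r < pw p n)%Z -> evenD p r n ->
  forall m, evenD p (extz p r m) m.
Proof.
  intros Hp Hr He m j Hj. unfold extz. rewrite dig_mod by auto.
  destruct (Nat.lt_ge_cases j n).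
  - now apply He.
  - unfold dig. rewrite Z.div_small. reflexivity.
    split; try lia. eapply Z.lt_le_trans; [apply Hr|]. apply pw_le; auto.
Qed.

Lemma extz_n p r n : (0 <= r < pw p n)%Z -> extz p r n = r.
Proof. intros; unfold extz; now apply Z.mod_small. Qed.

Lemma ev_S p r m : evenD p r (S m) <-> evenD p r m /\ Z.even (dig p r m) = true.
Proof.
  split.
  - intros H; split; [intros j Hj; apply H; lia | apply H; lia].
  - intros [H1 H2] j Hj. destruct (Nat.eq_dec j m); [subst; auto | apply H1; lia].
Qed.
Definition Kset p : pset := fun x => padic p x /\ forall n, evenD p (x n) n.
Definition csl (k : nat) : list Z := map (fun i => (2 * Z.of_nat i)%Z) (seq 0 (S k)).

Lemma phi1 p c x n : phi p 1 c x n = ((c + Z.of_nat p * x n) mod pw p n)%Z.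
Proof. unfold phi. change (Z.of_nat 1) with 1%Z. now rewrite Z.pow_1_r. Qed.

Lemma in_csl k c : In c (csl k) <-> (0 <= c < Z.of_nat (2 * k + 1))%Z /\ Z.even c = true.
Proof.
  unfold csl. rewrite in_map_iff. split.
  - intros [i [<- Hi]]. apply in_seq in Hi. split; [lia|].
    rewrite Z.even_spec. exists (Z.of_nat i). lia.
  - intros [Hc He]. apply Z.even_spec in He. destruct He as [m Hm].
    exists (Z.to_nat m). split; [lia|]. apply in_seq. lia.
Qed.

Lemma csl_len k : length (csl k) = S k.
Proof. unfold csl. now rewrite length_map, length_seq. Qed.

Lemma csl_nodup k : NoDup (csl k).
Proof.
  unfold csl. apply NoDup_map_NoDup_ForallPairs; [| apply seq_NoDup].
  intros a b _ _ H. lia.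
Qed.

Lemma cong_phi p c A B M : (0 < M)%Z -> (A mod M = B mod M)%Z ->
  ((c + Z.of_nat p * A) mod M = (c + Z.of_nat p * B) mod M)%Z.
Proof.
  intros HM H. rewrite Z.add_mod, (Z.add_mod c) by lia.
  rewrite (Z.mul_mod _ A), (Z.mul_mod _ B), H by lia. reflexivity.
Qed.

Lemma cong_phiS p c A B n : (0 < p)%nat -> (A mod pw p n = B mod pw p n)%Z ->
  ((c + Z.of_nat p * A) mod pw p (S n) = (c + Z.of_nat p * B) mod pw p (S n))%Z.
Proof.
  intros Hp H. assert (HN := pw_pos p n Hp). rewrite pw_S.
  rewrite Z.add_mod, (Z.add_mod c) by nia.
  rewrite !Z.mul_mod_distr_l, H by lia. reflexivity.
Qed.

Lemma phi_padic p c x : (0 < p)%nat -> padic p x -> padic p (phi p 1 c x).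
Proof.
  intros Hp Hx n. rewrite !phi1. split.
  - apply Z.mod_pos_bound, pw_pos; auto.
  - rewrite Z.mod_mod_divide by (apply pw_div; lia).
    apply cong_phi; [apply pw_pos; auto|].
    rewrite (proj2 (Hx n)). symmetry. apply Z.mod_small, Hx.
Qed.

Section SS.
Variable k : nat.
Let p := (2 * k + 1)%nat.
Hypothesis Hk : (1 <= k)%nat.
Let Hp : (0 < p)%nat. Proof. unfold p; lia. Qed.

Lemma K_ss_fwd y : Kset p y -> exists c, In c (csl k) /\
   exists x, padic p x /\ Kset p x /\ forall n, y n = phi p 1 c x n.
Proof.
  intros [Hy Hev]. exists (y 1%nat).
  assert (Hpw1 : pw p 1 = Z.of_nat p) by (change (Z.of_nat 1) with 1%Z; apply Z.pow_1_r).
  assert (Hc : (0 <= y 1%nat < Z.of_nat p)%Z) by (rewrite <- Hpw1; apply Hy).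
  split.
  { apply in_csl. split; [exact Hc|].
    specialize (Hev 1%nat 0%nat ltac:(lia)). unfold dig in Hev.
    simpl Z.of_nat in Hev. rewrite Z.pow_0_r, Z.div_1_r, Z.mod_small in Hev by lia. exact Hev. }
  set (x := fun n => (y (S n) / Z.of_nat p)%Z).
  assert (Hx : padic p x).
  { intros n. unfold x. split.
    - split. apply Z.div_pos; [apply Hy|lia].
      apply Z.div_lt_upper_bound; [lia|]. rewrite <- pw_S. apply Hy.
    - assert (HN := pw_pos p n Hp).
      rewrite (Z.div_mod (y (S (S n))) (pw p (S n))) by lia.
      rewrite (padic_coh p y (S n) (S (S n))) by (auto; lia).
      rewrite pw_S.
      replace (Z.of_nat p * pw p n * (y (S (S n)) / (Z.of_nat p * pw p n)) + y (S n))%Z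
        with (y (S n) + (pw p n * (y (S (S n)) / (Z.of_nat p * pw p n))) * Z.of_nat p)%Z by ring.
      rewrite Z.div_add by lia.
      rewrite Z.mul_comm, Z.mod_add by lia.
      apply Z.mod_small. split. apply Z.div_pos; [apply Hy|lia].
      apply Z.div_lt_upper_bound; [lia|]. rewrite <- pw_S. apply Hy. }
  exists x. split; [exact Hx|]. split; [split; [exact Hx|]|].
  - intros n j Hj. unfold x. rewrite dig_shift by auto. apply Hev. lia.
  - intros n. rewrite phi1. unfold x.
    rewrite <- (padic_coh p y 1 (S n)) by (auto; lia). rewrite Hpw1.
    rewrite Z.add_comm, <- Z.div_mod by lia. symmetry. apply padic_coh; auto.
Qed.

Lemma K_ss_bwd y c x : padic p y -> In c (csl k) -> padic p x -> Kset p x ->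
  (forall n, y n = phi p 1 c x n) -> Kset p y.
Proof.
  intros Hy Hc Hx [_ Hxe] Hyx. split; [exact Hy|].
  apply in_csl in Hc. fold p in Hc.
  intros n. rewrite Hyx, phi1. apply ev_phi with (m := n); auto; apply Hc.
Qed.

Lemma K_ss : self_similar_eq p 1 (csl k) (Kset p).
Proof.
  intros y Hy. split.
  - apply K_ss_fwd.
  - intros [c [Hc [x [Hx [HKx Hyx]]]]]. eapply K_ss_bwd; eauto.
Qed.
End SS.
Definition stepQ (Q : nat -> Z -> Z -> Prop) (n : nat) (r : Z) : Z :=
  match excluded_middle_informative (exists d, Q n r d) with
  | left h => proj1_sig (constructive_indefinite_description _ h)
  | right _ => 0%Z
  end.

Lemma stepQ_spec Q n r : (exists d, Q n r d) -> Q n r (stepQ Q n r).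
Proof.
  intros H. unfold stepQ. destruct excluded_middle_informative as [h|h]; [|contradiction].
  exact (proj2_sig (constructive_indefinite_description _ h)).
Qed.

Fixpoint cseq p (Q : nat -> Z -> Z -> Prop) (n : nat) : Z :=
  match n with
  | O => 0%Z
  | S n => (cseq p Q n + pw p n * stepQ Q n (cseq p Q n))%Z
  end.

Lemma padic_0 p x : padic p x -> x 0%nat = 0%Z.
Proof. intros H. destruct (H 0%nat) as [H1 _]. simpl in H1. lia. Qed.

Lemma K_compact p : (0 < p)%nat -> pcompact p (Kset p).
Proof.
  intros Hp I U HU Hcov. apply NNPP; intro Hno.
  set (Bad := fun (r : Z) (n : nat) => ~ exists l : list I, forall x, padic p x -> Kset p x ->
         x n = r -> exists i, In i l /\ U i x).
  assert (B0 : Bad 0%Z 0%nat).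
  { intros [l Hl]. apply Hno. exists l. intros x Hx HK. apply Hl; auto. now apply (padic_0 p). }
  assert (Split : forall r n, Bad r n -> exists d, (0 <= d < Z.of_nat p)%Z /\ Bad (r + pw p n * d)%Z (S n)).
  { intros r n Hb. apply NNPP; intro Hn. apply Hb.
    assert (G : forall d, (0 <= d < Z.of_nat p)%Z -> exists l : list I, forall x, padic p x -> Kset p x ->
         x (S n) = (r + pw p n * d)%Z -> exists i, In i l /\ U i x).
    { intros d Hd. apply NNPP; intro H'. apply Hn. exists d. split; auto. }
    assert (G2 : forall m : nat, (m <= p)%nat -> exists l : list I, forall x d, padic p x -> Kset p x ->
         (0 <= d < Z.of_nat m)%Z -> x (S n) = (r + pw p n * d)%Z -> exists i, In i l /\ U i x).
    { induction m as [|m IH]; intros Hm.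
      - exists nil. intros x d _ _ Hd. lia.
      - destruct (IH ltac:(lia)) as [l1 Hl1].
        destruct (G (Z.of_nat m) ltac:(lia)) as [l2 Hl2].
        exists (l1 ++ l2). intros x d Hx HK Hd Hxd.
        destruct (Z.eq_dec d (Z.of_nat m)) as [->|Hne].
        + destruct (Hl2 x Hx HK Hxd) as [i [Hi Hu]]. exists i. split; auto. apply in_or_app; auto.
        + destruct (Hl1 x d Hx HK ltac:(lia) Hxd) as [i [Hi Hu]]. exists i. split; auto. apply in_or_app; auto. }
    destruct (G2 p (le_n _)) as [l Hl]. exists l. intros x Hx HK Hxn.
    assert (HN := pw_pos p n Hp).
    apply (Hl x (x (S n) / pw p n)%Z Hx HK).
    - split. apply Z.div_pos; [apply Hx|lia].
      apply Z.div_lt_upper_bound; [lia|]. rewrite Z.mul_comm, <- pw_S. apply Hx.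
    - rewrite (Z.div_mod (x (S n)) (pw p n)) at 1 by lia.
      rewrite padic_coh by (auto; lia). lia. }
  set (Q := fun n r d => (0 <= d < Z.of_nat p)%Z /\ Bad (r + pw p n * d)%Z (S n)).
  set (s := cseq p Q).
  assert (Inv : forall n, Bad (s n) n /\ (0 <= s n < pw p n)%Z).
  { induction n as [|n [IHb IHr]].
    - split; [exact B0|]. unfold s; simpl. lia.
    - assert (HQ := stepQ_spec Q n (s n) (Split _ _ IHb)).
      destruct HQ as [Hd Hb]. split; [exact Hb|].
      unfold s; simpl cseq. fold s. rewrite pw_S. assert (HN := pw_pos p n Hp). nia. }
  assert (Hs : padic p s).
  { intros n. split; [apply Inv|]. unfold s; simpl cseq. fold s.
    assert (HN := pw_pos p n Hp).
    rewrite Z.mul_comm, Z.mod_add by lia. apply Z.mod_small, Inv. }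
  assert (HKs : Kset p s).
  { split; [exact Hs|]. intros n.
    destruct (classic (exists x, padic p x /\ Kset p x /\ x n = s n)) as [[x [Hx [HK Hxn]]]|Hne].
    - rewrite <- Hxn. apply HK.
    - exfalso. apply (proj1 (Inv n)). exists nil. intros x Hx HK Hxn. exfalso. apply Hne. eauto. }
  destruct (Hcov s Hs HKs) as [i Hi].
  destruct (HU i s Hs Hi) as [n Hn].
  apply (proj1 (Inv n)). exists (i :: nil). intros x Hx HK Hxn.
  exists i. split; [left; auto|]. apply Hn; auto. split; auto.
Qed.

Section Uniq.
Variable k : nat.
Let p := (2 * k + 1)%nat.
Hypothesis Hk : (1 <= k)%nat.
Let Hp : (0 < p)%nat. Proof. unfold p; lia. Qed.

Lemma K_attractor : attractor p 1 (csl k) (Kset p).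
Proof.
  split; [|split].
  - exists (fun _ => 0%Z). assert (Hz : padic p (fun _ => 0%Z)).
    { intros n; split; [split; [lia|apply pw_pos; auto]|]. apply Z.mod_0_l. pose proof (pw_pos p n Hp); lia. }
    split; auto. split; auto. intros n j Hj. unfold dig. rewrite Z.div_0_l, Z.mod_0_l; auto.
    pose proof (pw_pos p j Hp); lia. unfold p; lia.
  - apply K_compact, Hp.
  - apply K_ss, Hk.
Qed.

Lemma Kp_sub K' : attractor p 1 (csl k) K' -> forall n y, padic p y -> K' y -> evenD p (y n) n.
Proof.
  intros [_ [_ Hss]] n. induction n as [|n IH]; intros y Hy HK'.
  - intros j Hj; lia.
  - destruct (proj1 (Hss y Hy) HK') as [c [Hc [x [Hx [HKx Hyx]]]]].
    rewrite Hyx, phi1. apply in_csl in Hc. fold p in Hc.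
    apply ev_phi with (m := n); auto; try apply Hc.
    apply ev_up; auto.
Qed.

Lemma K_approx K' : attractor p 1 (csl k) K' -> forall N y, Kset p y ->
  exists z, padic p z /\ K' z /\ z N = y N.
Proof.
  intros HA. destruct HA as [[x0 [Hx0 HK0]] [_ Hss]].
  induction N as [|N IH]; intros y HKy.
  - exists x0. split; auto. split; auto. rewrite (padic_0 p x0), (padic_0 p y); auto. apply HKy.
  - destruct (K_ss_fwd k Hk y HKy) as [c [Hc [x [Hx [HKx Hyx]]]]].
    destruct (IH x HKx) as [z' [Hz' [HKz' Hz'N]]].
    exists (phi p 1 c z'). assert (Hz := phi_padic p c z' Hp Hz').
    split; auto. split.
    + apply (proj2 (Hss _ Hz)). exists c. split; auto. exists z'. auto.
    + rewrite Hyx, !phi1. apply cong_phiS; auto.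
      rewrite !padic_coh by (auto; lia). auto.
Qed.

Lemma K_unique K' : attractor p 1 (csl k) K' -> pset_eq p K' (Kset p).
Proof.
  intros HA y Hy. split.
  - intros HK'. split; auto. intros n. eapply Kp_sub; eauto.
  - intros HKy. apply NNPP; intro HnK.
    destruct HA as [Hne [Hc Hss]].
    destruct (Hc nat (fun kk x => x kk <> y kk)) as [l Hl].
    + intros kk x Hx Hxk. exists kk. intros z Hz [_ Hzk]. congruence.
    + intros x Hx HK'. apply NNPP; intro Hn. apply HnK.
      replace y with x; auto. apply functional_extensionality. intros kk.
      apply NNPP; intro H'. apply Hn. exists kk. auto.
    + destruct (K_approx K' (conj Hne (conj Hc Hss)) (list_max l) y HKy) as [z [Hz [HKz HzN]]].
      destruct (Hl z Hz HKz) as [kk [Hin Hne']]. apply Hne'.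
      assert (Hle : (kk <= list_max l)%nat).
      { assert (H := proj1 (list_max_le l (list_max l)) (le_n _)).
        rewrite Forall_forall in H. auto. }
      rewrite <- (padic_coh p z kk (list_max l)), <- (padic_coh p y kk (list_max l)); auto.
      congruence.
Qed.
End Uniq.
Definition sumR (f : nat -> R) (N : nat) : R := fold_right Rplus 0 (map f (seq 0 N)).

Lemma fold_Rplus_init l x : fold_right Rplus x l = fold_right Rplus 0 l + x.
Proof. induction l; simpl; [lra| rewrite IHl; lra]. Qed.

Lemma map_seq_shift (f : nat -> R) A s B :
  map f (seq (A + s) B) = map (fun r => f (A + r)%nat) (seq s B).
Proof.
  revert s. induction B; intros s; simpl; auto. f_equal. rewrite <- IHB. f_equal. f_equal. lia.
Qed.

Lemma sumR_app f A B : sumR f (A + B) = sumR f A + sumR (fun r => f (A + r)%nat) B.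
Proof.
  unfold sumR. rewrite seq_app, map_app, fold_right_app, fold_Rplus_init.
  f_equal. simpl. rewrite <- (map_seq_shift f A 0). rewrite Nat.add_0_r. reflexivity.
Qed.

Lemma sumR_S f D : sumR f (S D) = sumR f D + f D.
Proof.
  replace (S D) with (D + 1)%nat by lia. rewrite sumR_app. unfold sumR at 2. simpl.
  rewrite Nat.add_0_r. lra.
Qed.

Lemma sumR_mul f B D :
  sumR f (B * D) = sumR (fun d => sumR (fun r => f (B * d + r)%nat) B) D.
Proof.
  induction D.
  - rewrite Nat.mul_0_r. reflexivity.
  - rewrite Nat.mul_succ_r, sumR_app, sumR_S, IHD. reflexivity.
Qed.

Lemma sumR_ext f g N : (forall r, (r < N)%nat -> f r = g r) -> sumR f N = sumR g N.
Proof.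
  intros H. unfold sumR. f_equal. apply map_ext_in. intros a Ha. apply in_seq in Ha. apply H. lia.
Qed.

Lemma sumR_scal f c N : sumR (fun r => f r * c) N = sumR f N * c.
Proof.
  induction N; [unfold sumR; simpl; lra|]. rewrite !sumR_S, IHN. lra.
Qed.

Lemma ind_iff (P Q : Prop) : (P <-> Q) -> Defs.ind P = Defs.ind Q.
Proof.
  intros H. unfold Defs.ind. destruct (excluded_middle_informative P), (excluded_middle_informative Q); first [reflexivity | tauto].
Qed.

Lemma ind_and (P Q : Prop) : Defs.ind (P /\ Q) = Defs.ind P * Defs.ind Q.
Proof.
  unfold Defs.ind. destruct (excluded_middle_informative P), (excluded_middle_informative Q), (excluded_middle_informative (P /\ Q)); first [lra | tauto].
Qed.

Lemma ind_F (P : Prop) : ~ P -> Defs.ind P = 0.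
Proof. intros H. unfold Defs.ind. destruct (excluded_middle_informative P); tauto. Qed.
Lemma ind_T (P : Prop) : P -> Defs.ind P = 1.
Proof. intros H. unfold Defs.ind. destruct (excluded_middle_informative P); tauto. Qed.

Lemma even_2k1 k : Z.even (Z.of_nat (2 * k + 1)) = false.
Proof. replace (Z.of_nat (2 * k + 1)) with (2 * Z.of_nat k + 1)%Z by lia. apply Z.even_odd. Qed.
Lemma even_2k k : Z.even (Z.of_nat (2 * k)) = true.
Proof. apply Z.even_spec. exists (Z.of_nat k). lia. Qed.

Lemma count_odd k : sumR (fun d => Defs.ind (Z.even (Z.of_nat d) = false)) (2 * k + 1) = INR k.
Proof.
  induction k.
  - unfold sumR. simpl. rewrite ind_F; [lra|]. simpl. discriminate.
  - replace (2 * S k + 1)%nat with ((2 * k + 1) + 2)%nat by lia. rewrite sumR_app, IHk.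
    unfold sumR at 1. cbn [seq map fold_right]. rewrite Nat.add_0_r.
    rewrite ind_T by apply even_2k1.
    rewrite ind_F. rewrite S_INR; lra.
    replace (2 * k + 1 + 1)%nat with (2 * (S k))%nat by lia. rewrite even_2k. discriminate.
Qed.

Lemma count_even k : sumR (fun d => Defs.ind (Z.even (Z.of_nat d) = true)) (2 * k + 1) = INR k + 1.
Proof.
  induction k.
  - unfold sumR. simpl. rewrite ind_T; [lra|]. reflexivity.
  - replace (2 * S k + 1)%nat with ((2 * k + 1) + 2)%nat by lia. rewrite sumR_app, IHk.
    unfold sumR at 1. cbn [seq map fold_right]. rewrite Nat.add_0_r.
    rewrite ind_F by (rewrite even_2k1; discriminate).
    rewrite ind_T. rewrite S_INR; lra.
    replace (2 * k + 1 + 1)%nat with (2 * (S k))%nat by lia. apply even_2k.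
Qed.

Lemma decomp_mod p m d r0 : (0 < p)%nat -> (r0 < p ^ m)%nat ->
  (Z.of_nat (p ^ m * d + r0) mod pw p m)%Z = Z.of_nat r0.
Proof.
  intros Hp Hr. rewrite <- Nat2Z.inj_pow.
  replace (Z.of_nat (p ^ m * d + r0)) with (Z.of_nat r0 + Z.of_nat d * Z.of_nat (p ^ m))%Z by lia.
  rewrite Z.mod_add by lia. apply Z.mod_small. lia.
Qed.

Lemma decomp_dig p m d r0 : (0 < p)%nat -> (r0 < p ^ m)%nat -> (d < p)%nat ->
  dig p (Z.of_nat (p ^ m * d + r0)) m = Z.of_nat d.
Proof.
  intros Hp Hr Hd. unfold dig. rewrite <- Nat2Z.inj_pow.
  replace (Z.of_nat (p ^ m * d + r0)) with (Z.of_nat r0 + Z.of_nat d * Z.of_nat (p ^ m))%Z by lia.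
  rewrite Z.div_add by lia. rewrite Z.div_small by lia. apply Z.mod_small. lia.
Qed.

Lemma decomp_range p m d r0 : (0 < p)%nat -> (r0 < p ^ m)%nat -> (d < p)%nat ->
  (0 <= Z.of_nat (p ^ m * d + r0) < pw p (S m))%Z.
Proof.
  intros Hp Hr Hd. rewrite <- Nat2Z.inj_pow. split; [lia|]. apply inj_lt.
  rewrite Nat.pow_succ_r'. nia.
Qed.

Lemma evS_decomp p m d r0 : (0 < p)%nat -> (r0 < p ^ m)%nat -> (d < p)%nat ->
  (evenD p (Z.of_nat (p ^ m * d + r0)) (S m) <->
   evenD p (Z.of_nat r0) m /\ Z.even (Z.of_nat d) = true).
Proof.
  intros Hp Hr Hd. rewrite ev_S, (ev_mod p _ m Hp), decomp_mod, decomp_dig by auto. tauto.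
Qed.

Lemma sub_compl p r n : (0 < p)%nat -> (0 <= r < pw p n)%Z ->
  (psubset p (Defs.ball p r n) (in_compl (Kset p)) <-> ~ evenD p r n).
Proof.
  intros Hp Hr. split.
  - intros Hs He. apply (Hs (extz p r)).
    + apply extz_padic; auto.
    + split; [apply extz_padic; auto| apply extz_n; auto].
    + split; [apply extz_padic; auto| apply extz_ev with n; auto].
  - intros Hne x Hx [_ Hxn] HK. apply Hne. rewrite <- Hxn. apply HK.
Qed.

Lemma MB_iff p r m : (0 < p)%nat ->
  (maximal_ball p (Kset p) r (S m) <->
   (0 <= r < pw p (S m))%Z /\ evenD p (r mod pw p m) m /\ Z.even (dig p r m) = false).
Proof.
  intros Hp. unfold maximal_ball. replace (S m - 1)%nat with m by lia.
  assert (HN := pw_pos p m Hp).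
  assert (Hrm : (0 <= r mod pw p m < pw p m)%Z) by (apply Z.mod_pos_bound; lia).
  split.
  - intros [_ [Hr [Hs Hns]]]. split; auto.
    rewrite sub_compl in Hs, Hns by auto.
    assert (H1 : evenD p (r mod pw p m) m) by (apply NNPP; auto).
    split; auto. rewrite ev_S, (ev_mod p r m Hp) in Hs.
    destruct (Z.even (dig p r m)); tauto.
  - intros [Hr [H1 H2]]. split; [lia|]. split; auto.
    rewrite !sub_compl by auto. split; [|tauto].
    rewrite ev_S. rewrite H2. intros [_ ?]; discriminate.
Qed.

Lemma mult_0 p : Defs.mult p (Kset p) 0 = 0.
Proof.
  unfold Defs.mult. simpl. rewrite ind_F; [lra|]. intros [H _]. lia.
Qed.

Section Count.
Variable k : nat.
Let p := (2 * k + 1)%nat.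
Let Hp : (0 < p)%nat. Proof. unfold p; lia. Qed.

Lemma count_ev m : sumR (fun r => Defs.ind (evenD p (Z.of_nat r) m)) (p ^ m) = (INR k + 1) ^ m.
Proof.
  induction m.
  - unfold sumR. simpl. rewrite ind_T; [lra|]. intros j Hj; lia.
  - rewrite Nat.pow_succ_r', Nat.mul_comm, sumR_mul.
    rewrite (sumR_ext _ (fun d => sumR (fun r0 => Defs.ind (evenD p (Z.of_nat r0) m)) (p ^ m) *
               Defs.ind (Z.even (Z.of_nat d) = true))).
    + rewrite (sumR_ext _ (fun d => Defs.ind (Z.even (Z.of_nat d) = true) * (INR k + 1) ^ m) p).
      * rewrite sumR_scal. unfold p. rewrite count_even. simpl. lra.
      * intros d _. rewrite IHm. lra.
    + intros d Hd. rewrite <- sumR_scal. apply sumR_ext. intros r0 Hr0.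
      rewrite <- ind_and. apply ind_iff. apply evS_decomp; auto.
Qed.

Lemma mult_S m : Defs.mult p (Kset p) (S m) = INR k * (INR k + 1) ^ m.
Proof.
  unfold Defs.mult. fold (sumR (fun r => Defs.ind (maximal_ball p (Kset p) (Z.of_nat r) (S m))) (p ^ S m)).
  rewrite Nat.pow_succ_r', Nat.mul_comm, sumR_mul.
  rewrite (sumR_ext _ (fun d => sumR (fun r0 => Defs.ind (evenD p (Z.of_nat r0) m)) (p ^ m) *
               Defs.ind (Z.even (Z.of_nat d) = false))).
  + rewrite (sumR_ext _ (fun d => Defs.ind (Z.even (Z.of_nat d) = false) * (INR k + 1) ^ m) p).
    * rewrite sumR_scal. unfold p. rewrite count_odd. lra.
    * intros d _. rewrite count_ev. lra.
  + intros d Hd. rewrite <- sumR_scal. apply sumR_ext. intros r0 Hr0.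
    rewrite <- ind_and. apply ind_iff. rewrite MB_iff by auto.
    rewrite decomp_mod, decomp_dig by auto.
    split; [tauto|]. intros [H1 H2]. split; auto. apply decomp_range; auto.
Qed.
End Count.
Lemma exp_nmul n x : exp (INR n * x) = exp x ^ n.
Proof.
  induction n; simpl pow. - simpl. rewrite Rmult_0_l. apply exp_0.
  - rewrite S_INR, Rmult_plus_distr_r, Rmult_1_l, exp_plus, IHn. ring.
Qed.

Section Absc.
Variable k : nat.
Hypothesis Hk : (1 <= k)%nat.
Let p := (2 * k + 1)%nat.
Let L := ln (INR p).
Let q := INR k + 1.

Lemma INRp : INR p = 2 * INR k + 1.
Proof. unfold p. rewrite plus_INR, mult_INR. simpl. lra. Qed.

Lemma kpos : 1 <= INR k.
Proof. apply (le_INR 1). lia. Qed.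

Lemma Lpos : 0 < L.
Proof. unfold L. rewrite <- ln_1. apply ln_increasing; [lra|]. rewrite INRp. pose proof kpos. lra. Qed.

Lemma qpos : 0 < q.
Proof. unfold q. pose proof kpos. lra. Qed.

Lemma D_eq : ln ((1 + INR p) / 2) / ln (INR p) = ln q / L.
Proof. unfold L. rewrite INRp. unfold q. f_equal. f_equal. field. Qed.

Lemma Rpower_term n s : Rpower (/ INR p ^ n) s = exp (- s * L) ^ n.
Proof.
  unfold Rpower. rewrite <- exp_nmul. f_equal.
  assert (0 < INR p) by (rewrite INRp; pose proof kpos; lra).
  rewrite ln_Rinv by (apply pow_lt; auto). rewrite ln_pow by auto. unfold L. ring.
Qed.

Lemma term_S n s : Defs.mult p (Kset p) (S n) * Rpower (/ INR p ^ S n) s =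
  (INR k * exp (- s * L)) * (q * exp (- s * L)) ^ n.
Proof.
  replace (Defs.mult p (Kset p) (S n)) with (INR k * (INR k + 1) ^ n) by (symmetry; apply mult_S).
  rewrite Rpower_term. unfold q. rewrite Rpow_mult_distr. simpl. ring.
Qed.

Lemma qrho s : q * exp (- s * L) = exp (ln q - s * L).
Proof. unfold Rminus. rewrite exp_plus, exp_ln by apply qpos. f_equal. f_equal. ring. Qed.

Lemma conv_gt s : ln q / L < s -> conv_at p (Kset p) s.
Proof.
  intros Hs. unfold conv_at. apply ex_series_incr_1.
  apply ex_series_ext with (a := fun n => scal (INR k * exp (- s * L)) ((q * exp (- s * L)) ^ n)).
  - intros n. rewrite term_S. reflexivity.
  - apply (@ex_series_scal_l R_AbsRing R_NormedModule). eexists. apply is_series_geom.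
    rewrite qrho, Rabs_pos_eq by (left; apply exp_pos).
    rewrite <- exp_0. apply exp_increasing.
    pose proof Lpos. apply Rmult_lt_compat_r with (r := L) in Hs; auto.
    unfold Rdiv in Hs. rewrite Rmult_assoc, Rinv_l in Hs by lra. lra.
Qed.

Lemma conv_le s : conv_at p (Kset p) s -> ln q / L <= s.
Proof.
  intros Hc. apply Rnot_lt_le. intros Hs.
  apply ex_series_lim_0 in Hc. apply is_lim_seq_incr_1 in Hc.
  set (c := INR k * exp (- s * L)).
  assert (Hcp : 0 < c) by (unfold c; pose proof kpos; pose proof (exp_pos (- s * L)); nra).
  assert (Hs' : 0 < ln q - s * L).
  { pose proof Lpos. apply Rmult_lt_compat_r with (r := L) in Hs; auto.
    unfold Rdiv in Hs. rewrite Rmult_assoc, Rinv_l in Hs by lra. lra. }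
  assert (Hle : forall n, c <= Defs.mult p (Kset p) (S n) * Rpower (/ INR p ^ S n) s).
  { intros n. rewrite term_S. fold c.
    rewrite <- (Rmult_1_r c) at 1. apply Rmult_le_compat_l; [lra|]. apply pow_R1_Rle.
    rewrite qrho, <- exp_0. left. apply exp_increasing. lra. }
  assert (H := is_lim_seq_le (fun _ => c) _ c 0 Hle (is_lim_seq_const c) Hc).
  simpl in H. lra.
Qed.

Lemma K_abscissa : is_abscissa p (Kset p) (ln ((1 + INR p) / 2) / ln (INR p)).
Proof.
  rewrite D_eq. split.
  - apply conv_le.
  - intros b Hb. apply Rnot_lt_le. intros Hlt.
    assert (H := Hb (ln q / L + (b - ln q / L) / 2) ltac:(apply conv_gt; lra)). lra.
Qed.
End Absc.
(** * Complex analysis helpers *)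
Definition G (l : R) (s : C) : C :=
  (exp (Re s * l) * cos (Im s * l), exp (Re s * l) * sin (Im s * l)).

Lemma cpow_G x s : cpow x s = G (ln x) s.
Proof. reflexivity. Qed.

Lemma G_add_l a b s : G (a + b) s = (G a s * G b s)%C.
Proof.
  unfold G, Cmult. simpl. apply injective_projections; simpl.
  - rewrite !Rmult_plus_distr_l, exp_plus, cos_plus; ring.
  - rewrite !Rmult_plus_distr_l, exp_plus, sin_plus; ring.
Qed.

Lemma G_add_s l s h : G l (s + h)%C = (G l s * G l h)%C.
Proof.
  unfold G, Cmult, Cplus, Re, Im. simpl. apply injective_projections; simpl.
  - rewrite !Rmult_plus_distr_r, exp_plus, cos_plus; ring.
  - rewrite !Rmult_plus_distr_r, exp_plus, sin_plus; ring.
Qed.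

Lemma G_scal l h : G l h = G 1 (RtoC l * h)%C.
Proof.
  unfold G, Cmult, RtoC, Re, Im. simpl. apply injective_projections; simpl;
  replace ((l * fst h - 0 * snd h) * 1) with (fst h * l) by ring;
  replace ((l * snd h + 0 * fst h) * 1) with (snd h * l) by ring; reflexivity.
Qed.

Lemma G_0 l : G 0 l = 1%C.
Proof.
  unfold G. rewrite !Rmult_0_r, exp_0, cos_0, sin_0. apply injective_projections; simpl; ring.
Qed.

Fixpoint Cpw (z : C) (n : nat) : C := match n with O => 1%C | S n => (z * Cpw z n)%C end.

Lemma G_nmul n l s : G (INR n * l) s = Cpw (G l s) n.
Proof.
  induction n.
  - simpl. rewrite Rmult_0_l. apply G_0.
  - rewrite S_INR, Rmult_plus_distr_r, Rmult_1_l, Rplus_comm, G_add_l, IHn. reflexivity.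
Qed.

Lemma Cpw_mult a b n : Cpw (a * b) n = (Cpw a n * Cpw b n)%C.
Proof. induction n; simpl. - ring. - rewrite IHn. ring. Qed.

Lemma Cpw_R x n : Cpw (RtoC x) n = RtoC (x ^ n).
Proof. induction n; simpl. - reflexivity. - rewrite IHn, RtoC_mult. reflexivity. Qed.

Lemma Cmod_Cpw z n : Cmod (Cpw z n) = Cmod z ^ n.
Proof. induction n; simpl. - apply Cmod_1. - rewrite Cmod_mult, IHn. reflexivity. Qed.

Lemma Cmod_G l s : Cmod (G l s) = exp (Re s * l).
Proof.
  unfold Cmod, G. simpl.
  replace ((exp (Re s * l) * cos (Im s * l)) * ((exp (Re s * l) * cos (Im s * l)) * 1) +
           (exp (Re s * l) * sin (Im s * l)) * ((exp (Re s * l) * sin (Im s * l)) * 1))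
    with (exp (Re s * l) * exp (Re s * l) * (sin (Im s * l) ^ 2 + cos (Im s * l) ^ 2)) by ring.
  rewrite <- !Rsqr_pow2, sin2_cos2, Rmult_1_r. apply sqrt_square. left; apply exp_pos.
Qed.

Lemma Cmod_le_sum z : Cmod z <= Rabs (fst z) + Rabs (snd z).
Proof.
  unfold Cmod. rewrite <- (sqrt_pow2 (Rabs (fst z) + Rabs (snd z))) by
    (pose proof (Rabs_pos (fst z)); pose proof (Rabs_pos (snd z)); lra).
  apply sqrt_le_1_alt. rewrite <- (pow2_abs (fst z)), <- (pow2_abs (snd z)).
  pose proof (Rabs_pos (fst z)); pose proof (Rabs_pos (snd z)). nra.
Qed.

Lemma fst_le_Cmod z : Rabs (fst z) <= Cmod z.
Proof. apply re_le_Cmod. Qed.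

Lemma snd_le_Cmod z : Rabs (snd z) <= Cmod z.
Proof.
  unfold Cmod. rewrite <- sqrt_Rsqr_abs. apply sqrt_le_1_alt. unfold Rsqr.
  pose proof (pow2_ge_0 (fst z)). simpl. nra.
Qed.

Lemma ball_C_Cmod (z w : C) (d : R) : @ball C_UniformSpace z d w -> Cmod (w - z)%C < 2 * d.
Proof.
  intros [H1 H2]. eapply Rle_lt_trans; [apply Cmod_le_sum|].
  change (Rabs (fst w - fst z) + Rabs (snd w - snd z) < 2 * d).
  change (Rabs (fst w - fst z) < d) in H1. change (Rabs (snd w - snd z) < d) in H2. lra.
Qed.

Lemma Cmod_ball_C (z w : C) (d : R) : Cmod (w - z)%C < d -> @ball C_UniformSpace z d w.
Proof.
  intros H. split.
  - change (Rabs (fst w - fst z) < d). eapply Rle_lt_trans; [|apply H].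
    apply (fst_le_Cmod (w - z)%C).
  - change (Rabs (snd w - snd z) < d). eapply Rle_lt_trans; [|apply H].
    apply (snd_le_Cmod (w - z)%C).
Qed.

Lemma deriv_bound f l : derivable_pt_lim f 0 l -> forall eps, 0 < eps ->
  exists d, 0 < d /\ forall h, Rabs h < d -> Rabs (f h - f 0 - l * h) <= eps * Rabs h.
Proof.
  intros Hd eps He. destruct (Hd eps He) as [d Hd']. exists d. split; [apply cond_pos|].
  intros h Hh. destruct (Req_dec h 0) as [->|Hn].
  - rewrite Rminus_diag, Rmult_0_r, Rminus_0_r, Rabs_R0. lra.
  - specialize (Hd' h Hn Hh). rewrite Rplus_0_l in Hd'.
    replace (f h - f 0 - l * h) with (((f h - f 0) / h - l) * h) by (field; auto).
    rewrite Rabs_mult. apply Rmult_le_compat_r; [apply Rabs_pos|lra].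
Qed.
Lemma G1_core eps : 0 < eps -> exists d, 0 < d /\ forall u : C, Cmod u < d ->
  Cmod (G 1 u - 1 - u)%C <= eps * Cmod u.
Proof.
  intros He. set (e1 := Rmin 1 (eps / 9)).
  assert (He1 : 0 < e1) by (unfold e1; apply Rmin_glb_lt; lra).
  assert (He1' : e1 <= 1) by apply Rmin_l.
  assert (He1'' : 9 * e1 <= eps) by (unfold e1; pose proof (Rmin_r 1 (eps / 9)); lra).
  clearbody e1.
  destruct (deriv_bound exp 1 ltac:(rewrite <- exp_0; apply derivable_pt_lim_exp) e1 He1) as [de [Hde Be]].
  assert (Hc0 : derivable_pt_lim cos 0 0) by (pose proof (derivable_pt_lim_cos 0) as H; rewrite sin_0, Ropp_0 in H; exact H).
  destruct (deriv_bound cos 0 Hc0 e1 He1) as [dc [Hdc Bc]].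
  destruct (deriv_bound sin 1 ltac:(rewrite <- cos_0; apply derivable_pt_lim_sin) e1 He1) as [ds [Hds Bs]].
  exists (Rmin (Rmin e1 de) (Rmin dc ds)). split.
  { repeat apply Rmin_glb_lt; auto. }
  intros u Hu.
  assert (Hx : Rabs (fst u) <= Cmod u) by apply fst_le_Cmod.
  assert (Hy : Rabs (snd u) <= Cmod u) by apply snd_le_Cmod.
  assert (Hu1 : Cmod u < e1) by (eapply Rlt_le_trans; [apply Hu|]; eapply Rle_trans; apply Rmin_l).
  assert (Hue : Cmod u < de) by (eapply Rlt_le_trans; [apply Hu|]; eapply Rle_trans; [apply Rmin_l|apply Rmin_r]).
  assert (Huc : Cmod u < dc) by (eapply Rlt_le_trans; [apply Hu|]; eapply Rle_trans; [apply Rmin_r|apply Rmin_l]).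
  assert (Hus : Cmod u < ds) by (eapply Rlt_le_trans; [apply Hu|]; eapply Rle_trans; [apply Rmin_r|apply Rmin_r]).
  set (x := fst u) in *. set (y := snd u) in *.
  specialize (Be x ltac:(lra)). specialize (Bc y ltac:(lra)). specialize (Bs y ltac:(lra)).
  rewrite exp_0, Rmult_1_l in Be. rewrite cos_0, Rmult_0_l, Rminus_0_r in Bc.
  rewrite sin_0, Rmult_1_l, Rminus_0_r in Bs.
  assert (E : (G 1 u - 1 - u)%C = (exp x * cos y - 1 - x, exp x * sin y - y)).
  { unfold G, Cminus, Cplus, Copp, Re, Im. fold x y. apply injective_projections; simpl; rewrite !Rmult_1_r; ring. }
  rewrite E. eapply Rle_trans; [apply Cmod_le_sum|]. simpl fst; simpl snd.
  assert (Hex : exp x <= 3).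
  { eapply Rle_trans; [|apply exp_le_3]. destruct (Req_dec x 1) as [Hx1|]; [rewrite Hx1; lra|].
    left. apply exp_increasing. pose proof (Rle_abs x). lra. }
  assert (Hex0 : 0 < exp x) by apply exp_pos.
  assert (R1 : Rabs (exp x * cos y - 1 - x) <= e1 * Rabs x + 3 * (e1 * Rabs y)).
  { replace (exp x * cos y - 1 - x) with ((exp x - 1 - x) + exp x * (cos y - 1)) by ring.
    eapply Rle_trans; [apply Rabs_triang|]. apply Rplus_le_compat; auto.
    rewrite Rabs_mult, (Rabs_pos_eq (exp x)) by lra.
    apply Rmult_le_compat; auto; try lra; apply Rabs_pos. }
  assert (Hsy : Rabs (sin y) <= 2 * e1).
  { replace (sin y) with ((sin y - y) + y) by ring.
    eapply Rle_trans; [apply Rabs_triang|]. nra. }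
  assert (R2 : Rabs (exp x * sin y - y) <= 2 * Rabs x * (2 * e1) + e1 * Rabs y).
  { replace (exp x * sin y - y) with (((exp x - 1 - x) + x) * sin y + (sin y - y)) by ring.
    eapply Rle_trans; [apply Rabs_triang|]. apply Rplus_le_compat; auto.
    rewrite Rabs_mult. apply Rmult_le_compat; try apply Rabs_pos; auto.
    eapply Rle_trans; [apply Rabs_triang|]. pose proof (Rabs_pos x). nra. }
  pose proof (Rabs_pos x). pose proof (Rabs_pos y). nra.
Qed.

Lemma is_derive_G l s : is_derive (G l) s (RtoC l * G l s)%C.
Proof.
  split; [apply is_linear_scal_l|]. intros x Hx.
  apply (@is_filter_lim_locally_unique C_AbsRing (AbsRing_NormedModule C_AbsRing)) in Hx. subst x.
  intros eps.
  set (M := Cmod (G l s) * (Rabs l + 1) + 1).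
  assert (HM : 0 < M) by (unfold M; pose proof (Cmod_ge_0 (G l s)); pose proof (Rabs_pos l); nra).
  destruct (G1_core (eps / M) ltac:(apply Rdiv_lt_0_compat; [apply cond_pos|lra])) as [d [Hd Hc]].
  assert (Hd' : 0 < d / (2 * (Rabs l + 1))) by (apply Rdiv_lt_0_compat; [lra|pose proof (Rabs_pos l); lra]).
  exists (mkposreal _ Hd'). intros y Hy. simpl in Hy.
  change (Cmod (y - s)%C < d / (2 * (Rabs l + 1))) in Hy. change C in y.
  change (Cmod ((G l y - G l s) - (y - s) * (RtoC l * G l s))%C <= eps * Cmod (y - s)%C).
  assert (Ey : G l y = (G l s * G 1 (RtoC l * (y - s)))%C).
  { rewrite <- G_scal, <- G_add_s. f_equal. ring. }
  rewrite Ey.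
  replace ((G l s * G 1 (RtoC l * (y - s)) - G l s) - (y - s) * (RtoC l * G l s))%C
    with (G l s * (G 1 (RtoC l * (y - s)) - 1 - RtoC l * (y - s)))%C by ring.
  rewrite Cmod_mult.
  assert (Hl : Cmod (RtoC l * (y - s))%C = Rabs l * Cmod (y - s)%C) by (rewrite Cmod_mult, Cmod_R; auto).
  assert (Hlt : Cmod (RtoC l * (y - s))%C < d).
  { rewrite Hl. pose proof (Rabs_pos l). pose proof (Cmod_ge_0 (y - s)%C).
    assert (Cmod (y - s)%C * (2 * (Rabs l + 1)) < d).
    { apply Rmult_lt_compat_r with (r := 2 * (Rabs l + 1)) in Hy; [|lra].
      assert (d / (2 * (Rabs l + 1)) * (2 * (Rabs l + 1)) = d) by (field; lra). lra. }
    nra. }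
  specialize (Hc _ Hlt). rewrite Hl in Hc.
  pose proof (Cmod_ge_0 (G l s)). pose proof (Rabs_pos l). pose proof (Cmod_ge_0 (y - s)%C).
  pose proof (cond_pos eps).
  eapply Rle_trans. { apply Rmult_le_compat_l; [lra|]. apply Hc. }
  assert (eps / M * M = eps) by (field; lra).
  assert (Cmod (G l s) * Rabs l <= M) by (unfold M; nra).
  assert (0 <= eps / M) by (apply Rlt_le, Rdiv_lt_0_compat; lra).
  assert (Cmod (G l s) * Rabs l * (eps / M) <= M * (eps / M)) by (apply Rmult_le_compat_r; lra).
  replace (Cmod (G l s) * (eps / M * (Rabs l * Cmod (y - s)%C))) with
    ((Cmod (G l s) * Rabs l * (eps / M)) * Cmod (y - s)%C) by ring.
  apply Rmult_le_compat_r; lra.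
Qed.

Lemma Cmod_sub_ge (a b : C) : Cmod a - Cmod (b - a)%C <= Cmod b.
Proof.
  replace a with (b + (- (b - a)))%C at 1 by ring.
  pose proof (Cmod_triangle b (- (b - a))%C). rewrite Cmod_opp in H. lra.
Qed.

Lemma is_derive_Cinv (z : C) : z <> 0%C -> is_derive Cinv z (- / (z * z))%C.
Proof.
  intros Hz. split; [apply is_linear_scal_l|]. intros x Hx.
  apply (@is_filter_lim_locally_unique C_AbsRing (AbsRing_NormedModule C_AbsRing)) in Hx. subst x.
  intros eps. assert (Hzp : 0 < Cmod z) by (apply Cmod_gt_0; auto).
  set (d := Rmin (Cmod z / 2) (eps * Cmod z ^ 3 / 2)).
  assert (Hd : 0 < d / 2).
  { unfold d. apply Rdiv_lt_0_compat; [|lra]. apply Rmin_glb_lt; [lra|].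
    apply Rdiv_lt_0_compat; [|lra]. apply Rmult_lt_0_compat; [apply cond_pos|]. apply pow_lt; auto. }
  exists (mkposreal _ Hd). intros y Hy. simpl in Hy.
  change (Cmod (y - z)%C < d / 2) in Hy. change C in y.
  change (Cmod ((/ y - / z) - (y - z) * (- / (z * z)))%C <= eps * Cmod (y - z)%C).
  assert (Hd1 : d <= Cmod z / 2) by apply Rmin_l.
  assert (Hd2 : d <= eps * Cmod z ^ 3 / 2) by apply Rmin_r.
  assert (Hy0 : Cmod z / 2 < Cmod y) by (pose proof (Cmod_sub_ge z y); lra).
  assert (Hyn : y <> 0%C) by (intros ->; rewrite Cmod_0 in Hy0; lra).
  replace ((/ y - / z) - (y - z) * (- / (z * z)))%C with ((y - z) * (y - z) / (z * z * y))%C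
    by (field; auto).
  rewrite Cmod_div by (apply Cmult_neq_0; [apply Cmult_neq_0|]; auto).
  rewrite !Cmod_mult.
  set (a := Cmod (y - z)%C) in *. assert (0 <= a) by apply Cmod_ge_0.
  set (m := Cmod z) in *. set (c := Cmod y) in *.
  assert (Hmc : 0 < m * m * c) by (apply Rmult_lt_0_compat; [nra|lra]).
  apply Rmult_le_reg_r with (r := m * m * c). { exact Hmc. }
  unfold Rdiv. rewrite Rmult_assoc, Rinv_l by lra. rewrite Rmult_1_r.
  pose proof (cond_pos eps). simpl in Hd2.
  assert (a <= eps * (m * (m * (m * 1))) / 2) by lra.
  assert (a * a <= a * (eps * (m * (m * (m * 1))) / 2)) by (apply Rmult_le_compat_l; lra).
  assert (eps * a * (m * m * (m / 2)) <= eps * a * (m * m * c)).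
  { apply Rmult_le_compat_l; [nra|]. apply Rmult_le_compat_l; nra. }
  nra.
Qed.
Section Mero.
Variable k : nat.
Hypothesis Hk : (1 <= k)%nat.
Let p := (2 * k + 1)%nat.
Let L := ln (INR p).
Let q := INR k + 1.
Let D0 := ln q / L.
Let E (s : C) : C := G (- L) s.
Let w (s : C) : C := (RtoC q * E s)%C.
Let fz (s : C) : C := (RtoC (INR k) * E s * Cinv (1 - w s))%C.

Let INRp' : 0 < INR p.
Proof. unfold p. rewrite plus_INR, mult_INR. simpl. pose proof (pos_INR k). lra. Qed.

Let Lpos' : 0 < L. Proof. apply Lpos; auto. Qed.
Let qpos' : 0 < q. Proof. apply qpos; auto. Qed.
Let kpos' : 1 <= INR k. Proof. apply kpos; auto. Qed.

Lemma zeta_term_eq s n : zeta_term p (Kset p) s n = (RtoC (Defs.mult p (Kset p) n) * Cpw (E s) n)%C.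
Proof.
  unfold zeta_term. f_equal. rewrite cpow_G. unfold E. rewrite <- G_nmul. f_equal.
  rewrite ln_Rinv by (apply pow_lt; auto). rewrite ln_pow by auto. fold L. ring.
Qed.

Lemma term_S_C s n : zeta_term p (Kset p) s (S n) = (RtoC (INR k) * E s * Cpw (w s) n)%C.
Proof.
  rewrite zeta_term_eq.
  replace (Defs.mult p (Kset p) (S n)) with (INR k * (INR k + 1) ^ n) by (symmetry; apply mult_S).
  unfold w. rewrite Cpw_mult, Cpw_R. simpl Cpw. fold q. rewrite RtoC_mult. ring.
Qed.

Lemma term_0_C s : zeta_term p (Kset p) s 0 = 0%C.
Proof. rewrite zeta_term_eq, mult_0. simpl. ring. Qed.

Fixpoint psum (a : nat -> C) (N : nat) : C :=
  match N with O => a O | S N => (psum a N + a (S N))%C end.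

Lemma psum_eq s N : ((1 - w s) * psum (zeta_term p (Kset p) s) N =
   RtoC (INR k) * E s * (1 - Cpw (w s) N))%C.
Proof.
  induction N; simpl psum.
  - rewrite term_0_C. simpl. ring.
  - rewrite term_S_C. simpl Cpw.
    replace ((1 - w s) * (psum (zeta_term p (Kset p) s) N + RtoC (INR k) * E s * Cpw (w s) N))%C
      with ((1 - w s) * psum (zeta_term p (Kset p) s) N + (1 - w s) * (RtoC (INR k) * E s * Cpw (w s) N))%C by ring.
    rewrite IHN. ring.
Qed.

Lemma Cmod_E s : Cmod (E s) = exp (Re s * - L).
Proof. apply Cmod_G. Qed.

Lemma Cmod_w s : Cmod (w s) = exp (ln q - Re s * L).
Proof.
  unfold w. rewrite Cmod_mult, Cmod_R, Cmod_E, Rabs_pos_eq by lra.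
  unfold Rminus. rewrite exp_plus, exp_ln by auto. f_equal. f_equal. ring.
Qed.

Lemma series_part s : D0 < Re s -> is_series (zeta_term p (Kset p) s) (fz s).
Proof.
  intros Hs.
  assert (Hw : Cmod (w s) < 1).
  { rewrite Cmod_w, <- exp_0. apply exp_increasing.
    unfold D0 in Hs. apply Rmult_lt_compat_r with (r := L) in Hs; auto.
    assert (ln q / L * L = ln q) by (field; lra). lra. }
  assert (Hw1 : (1 - w s)%C <> 0%C).
  { intros H. assert (H0 : w s = 1%C).
    { replace (w s) with (1 - (1 - w s))%C by ring. rewrite H. ring. }
    rewrite H0, Cmod_1 in Hw. lra. }
  assert (Hw1p : 0 < Cmod (1 - w s)%C) by (apply Cmod_gt_0; auto).
  unfold is_series.
  apply filterlim_ext with (f := psum (zeta_term p (Kset p) s)).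
  { intros N. induction N.
    - rewrite sum_O. reflexivity.
    - rewrite sum_Sn, <- IHN. reflexivity. }
  apply filterlim_locally. intros eps.
  set (A := (RtoC (INR k) * E s)%C).
  destruct (pow_lt_1_zero (Cmod (w s)) ltac:(rewrite Rabs_pos_eq; auto; apply Cmod_ge_0)
     (eps * Cmod (1 - w s)%C / (Cmod A + 1))) as [N0 HN0].
  { apply Rdiv_lt_0_compat; [apply Rmult_lt_0_compat; [apply cond_pos|auto]|].
    pose proof (Cmod_ge_0 A); lra. }
  exists N0. intros N HN. apply Cmod_ball_C.
  assert (Hps : psum (zeta_term p (Kset p) s) N = (A * (1 - Cpw (w s) N) / (1 - w s))%C).
  { unfold A. rewrite <- psum_eq. field. auto. }
  rewrite Hps. unfold fz. fold A.
  replace (A * (1 - Cpw (w s) N) / (1 - w s) - A * / (1 - w s))%C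
    with (- (A * Cpw (w s) N / (1 - w s)))%C by (field; auto).
  rewrite Cmod_opp, Cmod_div, Cmod_mult, Cmod_Cpw by auto.
  specialize (HN0 N HN). rewrite Rabs_pos_eq in HN0 by (apply pow_le, Cmod_ge_0).
  pose proof (Cmod_ge_0 A). pose proof (pow_le (Cmod (w s)) N (Cmod_ge_0 _)).
  pose proof (cond_pos eps).
  apply Rmult_lt_reg_r with (r := Cmod (1 - w s)%C); auto.
  unfold Rdiv. rewrite Rmult_assoc, Rinv_l by lra. rewrite Rmult_1_r.
  assert (Cmod (w s) ^ N * (Cmod A + 1) < eps * Cmod (1 - w s)%C).
  { apply Rmult_lt_compat_r with (r := Cmod A + 1) in HN0; [|lra].
    assert (eps * Cmod (1 - w s)%C / (Cmod A + 1) * (Cmod A + 1) = eps * Cmod (1 - w s)%C) by (field; lra).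
    lra. }
  nra.
Qed.
Lemma is_derive_E s : is_derive E s (RtoC (- L) * E s)%C.
Proof. apply is_derive_G. Qed.

Lemma conv_der (f : C -> C) z l : @is_derive C_AbsRing (AbsRing_NormedModule C_AbsRing) f z l -> @is_derive C_AbsRing C_NormedModule f z l.
Proof. intros [H1 H2]. split.
- destruct H1 as [A B [M [HM HM']]]. split.
  + exact A.
  + exact B.
  + exists M. split. exact HM. intros x. exact (HM' x).
- intros x Hx eps. exact (H2 x Hx eps).
Qed.

Lemma conv_der' (f : C -> C) z l : @is_derive C_AbsRing C_NormedModule f z l -> @is_derive C_AbsRing (AbsRing_NormedModule C_AbsRing) f z l.
Proof. intros [H1 H2]. split.
- destruct H1 as [A B [M [HM HM']]]. split.
  + exact A.
  + exact B.
  + exists M. split. exact HM. intros x. exact (HM' x).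
- intros x Hx eps. exact (H2 x Hx eps).
Qed.

Lemma deriv_part z : (1 - w z)%C <> 0%C -> exists l : C, is_derive fz z l.
Proof.
  intros Hz.
  pose proof (conv_der' _ _ _ (is_derive_E z)) as HE.
  pose proof (@is_derive_mult C_AbsRing (fun _ => RtoC (INR k)) E z zero _ (@is_derive_const C_AbsRing (AbsRing_NormedModule C_AbsRing) _ _) HE Cmult_comm) as H1.
  pose proof (@is_derive_mult C_AbsRing (fun _ => RtoC q) E z zero _ (@is_derive_const C_AbsRing (AbsRing_NormedModule C_AbsRing) _ _) HE Cmult_comm) as H2.
  pose proof (@is_derive_minus C_AbsRing (AbsRing_NormedModule C_AbsRing) (fun _ => RtoC 1) _ z zero _ (@is_derive_const C_AbsRing (AbsRing_NormedModule C_AbsRing) _ _) H2) as H3.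
  pose proof (conv_der' _ _ _ (is_derive_Cinv (1 - w z)%C Hz)) as H4.
  pose proof (@is_derive_comp C_AbsRing (AbsRing_NormedModule C_AbsRing) Cinv _ z _ _ H4 H3) as H5.
  pose proof (@is_derive_mult C_AbsRing _ _ z _ _ H1 H5 Cmult_comm) as H6.
  eexists. apply conv_der. exact H6.
Qed.
Lemma h_zero v : (1 - w v)%C = 0%C -> exists n : Z, v = (D0, 2 * PI * IZR n / L).
Proof.
  intros H.
  assert (H1 : fst (1 - w v)%C = 0) by (rewrite H; reflexivity).
  assert (H2 : snd (1 - w v)%C = 0) by (rewrite H; reflexivity).
  unfold w, E, G, Cminus, Cplus, Copp, Cmult, RtoC, Re, Im in H1, H2. simpl in H1, H2.
  set (e := exp (fst v * - L)) in *. set (th := snd v * - L) in *.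
  assert (He : 0 < e) by apply exp_pos.
  assert (Hqe0 : 0 < q * e) by (apply Rmult_lt_0_compat; auto).
  assert (H2' : q * e * sin th = 0) by (ring_simplify in H2; lra).
  assert (H1' : q * e * cos th = 1) by (ring_simplify in H1; lra).
  assert (Hs : sin th = 0).
  { apply Rmult_integral in H2'. destruct H2' as [H0|H0]; auto. lra. }
  assert (Hc : cos th = 1).
  { pose proof (sin2_cos2 th) as H0. rewrite Hs in H0. unfold Rsqr in H0.
    assert (H3 : cos th * cos th = 1) by lra.
    assert (H4 : 0 < cos th).
    { destruct (Rle_lt_dec (cos th) 0) as [H5|H5]; auto.
      assert (q * e * cos th <= 0) by (apply Rmult_le_0_l; lra). lra. }
    nra. }
  assert (Hqe : q * e = 1) by (rewrite Hc in H1'; lra).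
  assert (Hσ : fst v = D0).
  { assert (e = / q) by (field_simplify_eq; [lra|lra]).
    assert (fst v * - L = - ln q).
    { unfold e in H0. rewrite <- ln_Rinv by auto. rewrite <- H0. rewrite ln_exp. reflexivity. }
    unfold D0. field_simplify_eq; [|lra]. lra. }
  assert (Hs2 : sin (th / 2) = 0).
  { pose proof (cos_2a_sin (th / 2)). replace (2 * (th / 2)) with th in H0 by field.
    rewrite Hc in H0. assert (sin (th / 2) * sin (th / 2) = 0) by lra. nra. }
  destruct (sin_eq_0_0 _ Hs2) as [j Hj].
  exists (- j)%Z. rewrite (surjective_pairing v). f_equal; auto.
  rewrite opp_IZR. unfold th in Hj.
  transitivity ((snd v * - L / 2) * (-2 / L)); [field; lra|]. rewrite Hj. field; lra.
Qed.

Lemma h_zero_conv n z : z = (D0, 2 * PI * IZR n / L) -> (1 - w z)%C = 0%C.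
Proof.
  intros ->.
  unfold w, E, G, Re, Im. simpl fst; simpl snd.
  assert (E1 : D0 * - L = - ln q) by (unfold D0; field; lra).
  assert (E2 : 2 * PI * IZR n / L * - L = - (2 * (IZR n * PI))) by (field; lra).
  rewrite E1, E2, exp_Ropp, exp_ln, cos_neg, sin_neg, cos_2a_sin, sin_2a by auto.
  rewrite sin_eq_0_1 by (exists n; reflexivity).
  unfold Cminus, Cplus, Copp, Cmult, RtoC. simpl. apply injective_projections; simpl; field; lra.
Qed.

Lemma pole_part z : (exists n : Z, z = (D0, 2 * PI * IZR n / L)) ->
  filterlim (fun v => Cmod (fz v)) (locally' z) (Rbar_locally p_infty).
Proof.
  intros [n Hzn].
  assert (Hz0 : (1 - w z)%C = 0%C) by (apply (h_zero_conv n); auto).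
  assert (Hwz : w z = 1%C) by (replace (w z) with (1 - (1 - w z))%C by ring; rewrite Hz0; ring).
  assert (HEz : Cmod (E z) = / q).
  { rewrite Cmod_E, Hzn. simpl. replace (D0 * - L) with (- ln q) by (unfold D0; field; lra).
    rewrite exp_Ropp, exp_ln; auto. }
  intros P' [M HM].
  set (eps1 := INR k / (4 * q ^ 2 * (Rabs M + 1))).
  assert (Heps1 : 0 < eps1).
  { unfold eps1. apply Rdiv_lt_0_compat; [lra|]. pose proof (Rabs_pos M). simpl. nra. }
  assert (Heps1q : eps1 <= / (4 * q)).
  { unfold eps1. pose proof (Rabs_pos M).
    apply Rmult_le_reg_r with (r := 4 * q ^ 2 * (Rabs M + 1)); [simpl; nra|].
    unfold Rdiv. rewrite Rmult_assoc, Rinv_l by (simpl; nra).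
    replace (/ (4 * q) * (4 * q ^ 2 * (Rabs M + 1))) with (q * (Rabs M + 1)) by (simpl; field; lra).
    unfold q. nra. }
  assert (HC := ex_derive_continuous E z (ex_intro _ _ (is_derive_E z))).
  destruct (proj1 (filterlim_locally E (E z)) HC (mkposreal eps1 Heps1)) as [d Hd].
  assert (Hd2 : 0 < Rmin (d / 2) (PI / L)).
  { apply Rmin_glb_lt; [pose proof (cond_pos d); lra|]. apply Rdiv_lt_0_compat; auto. apply PI_RGT_0. }
  exists (mkposreal _ Hd2). intros v Hv Hvz. simpl in Hv.
  assert (Hvz2 : Cmod (v - z)%C < d).
  { pose proof (ball_C_Cmod z v _ Hv). pose proof (Rmin_l (d / 2) (PI / L)). lra. }
  assert (Him : Rabs (snd v - snd z) < PI / L).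
  { destruct Hv as [_ Hv2]. change (Rabs (snd v - snd z) < Rmin (d / 2) (PI / L)) in Hv2.
    pose proof (Rmin_r (d / 2) (PI / L)). lra. }
  specialize (Hd v Hvz2). simpl in Hd.
  pose proof (ball_C_Cmod (E z) (E v) _ Hd) as HEv.
  assert (Hh : (1 - w v)%C <> 0%C).
  { intros Hh. destruct (h_zero v Hh) as [n' Hn'].
    assert (Hnn : n' <> n) by (intros ->; apply Hvz; rewrite Hn', Hzn; reflexivity).
    rewrite Hn', Hzn in Him. simpl in Him.
    replace (2 * PI * IZR n' / L - 2 * PI * IZR n / L) with (2 * PI / L * IZR (n' - n)) in Him
      by (rewrite minus_IZR; field; lra).
    rewrite Rabs_mult, Rabs_pos_eq in Him by (apply Rlt_le, Rdiv_lt_0_compat; auto; pose proof PI_RGT_0; lra).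
    rewrite <- abs_IZR in Him.
    assert (1 <= IZR (Z.abs (n' - n))) by (apply IZR_le; lia).
    assert (0 < PI / L) by (apply Rdiv_lt_0_compat; auto; apply PI_RGT_0).
    assert (2 * PI / L = 2 * (PI / L)) by (field; lra). nra. }
  assert (Hhv : (1 - w v)%C = (RtoC q * (E z - E v))%C).
  { rewrite <- Hwz. unfold w. ring. }
  assert (Hmh : Cmod (1 - w v)%C < 2 * q * eps1).
  { rewrite Hhv, Cmod_mult, Cmod_R, Rabs_pos_eq by lra.
    replace (E z - E v)%C with (- (E v - E z))%C by ring. rewrite Cmod_opp. nra. }
  assert (Hmh0 : 0 < Cmod (1 - w v)%C) by (apply Cmod_gt_0; auto).
  assert (HEv2 : / (2 * q) <= Cmod (E v)).
  { pose proof (Cmod_sub_ge (E z) (E v)). rewrite HEz in H.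
    assert (/ (2 * q) = / q - 2 * / (4 * q)) by (field; lra). lra. }
  apply HM.
  unfold fz. rewrite Cmod_mult, Cmod_mult, Cmod_inv, Cmod_R, Rabs_pos_eq by (auto; lra).
  set (Hm := Cmod (1 - w v)%C) in *. set (Ev := Cmod (E v)) in *.
  apply Rmult_lt_reg_r with (r := Hm); auto.
  rewrite Rmult_assoc, Rinv_l by lra. rewrite Rmult_1_r.
  assert (M * Hm <= (Rabs M + 1) * Hm) by (apply Rmult_le_compat_r; [lra|]; pose proof (Rle_abs M); lra).
  assert ((Rabs M + 1) * Hm < (Rabs M + 1) * (2 * q * eps1)) by (apply Rmult_lt_compat_l; [pose proof (Rabs_pos M); lra|auto]).
  assert ((Rabs M + 1) * (2 * q * eps1) = INR k * / (2 * q)).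
  { unfold eps1. simpl. pose proof (Rabs_pos M). field. repeat split; lra. }
  assert (INR k * / (2 * q) <= INR k * Ev) by (apply Rmult_le_compat_l; lra).
  lra.
Qed.
End Mero.
Lemma odd_p p : prime (Z.of_nat p) -> (2 < p)%nat -> exists k, p = (2 * k + 1)%nat /\ (1 <= k)%nat.
Proof.
  intros Hpr Hp2. destruct (Nat.Even_or_Odd p) as [[m Hm]|[m Hm]].
  - exfalso. assert (Hd : (2 | Z.of_nat p)%Z) by (exists (Z.of_nat m); lia).
    destruct (prime_divisors _ Hpr 2 Hd) as [H|[H|[H|H]]]; lia.
  - exists m. split; lia.
Qed.


Theorem theorem4p3 :
  forall p : nat, prime (Z.of_nat p) -> (2 < p)%nat ->
  let D := ln ((1 + INR p) / 2) / ln (INR p) in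
  exists (m : nat) (cs : list Z) (K : pset),
    (1 <= m)%nat /\ (2 <= length cs)%nat /\ NoDup cs /\
    attractor p m cs K /\
    (forall K' : pset, attractor p m cs K' -> pset_eq p K' K) /\
    is_abscissa p K D /\
    exists f : C -> C,
      meromorphic_cont_with_poles p K f
        (fun z : C => exists n : Z, z = (D, 2 * PI * IZR n / ln (INR p))).
Proof.
  intros p Hpr Hp2 D.
  destruct (odd_p p Hpr Hp2) as [k [Hpk Hk]]. subst p.
  exists 1%nat, (csl k), (Kset (2 * k + 1)).
  split; [lia|]. split; [rewrite csl_len; lia|]. split; [apply csl_nodup|].
  split; [apply K_attractor; auto|].
  split; [intros K' HK'; apply K_unique; auto|].
  split; [apply K_abscissa; auto|].
  subst D. rewrite D_eq.
  exists (fun s : C => (RtoC (INR k) * G (- ln (INR (2 * k + 1))) s *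
     Cinv (1 - RtoC (INR k + 1) * G (- ln (INR (2 * k + 1))) s))%C).
  split; [|split].
  - exists (ln (INR k + 1) / ln (INR (2 * k + 1))). intros s Hs.
    exact (series_part k Hk s Hs).
  - intros z Hz. apply (deriv_part k z). intros H. apply Hz.
    destruct (h_zero k Hk z H) as [n Hn]. exists n. exact Hn.
  - intros z Hz. exact (pole_part k Hk z Hz).
Qed.
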